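(* Let $G_{n\times n}$ denote the $n\times n$ square grid graph and $\pi_{\mathrm{opt}}(G_{n\times n})$ its optimal pebbling number. Then the limit $$\lim_{n\to\infty}\frac{n^2}{\pi_{\mathrm{opt}}(G_{n\times n})}$$ exists.
   Context: A pebble distribution on a graph $G$ is a function $D:V(G)\to\mathbb{N}$; its size is $|D|=\sum_v D(v)$. A pebbling move along an edge $vu$ with $D(v)\ge 2$ removes two pebbles from $v$ and adds one pebble to $u$. A vertex $v$ is reachable under $D$ if $D(v)\ge 1$ or there is a sequence of pebbling moves whose last move places a pebble on $v$. $D$ is solvable if every vertex is reachable. The optimal pebbling number $\pi_{\mathrm{opt}}(G)$ is the minimum size of a solvable distribution on $G$. The $n\times n$ grid $G_{n\times n}$ is the Cartesian product of two paths on $n$ vertices. *)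

(* Defs.v *)
From mathcomp Require Import all_boot.
From Stdlib Require Import Classical ClassicalEpsilon.

Set Implicit Arguments.
Unset Strict Implicit.
Unset Printing Implicit Defensive.

Definition gvert (n : nat) : finType := ('I_n * 'I_n)%type.

Definition path_adj (a b : nat) : bool := (b == a.+1) || (a == b.+1).

Definition grid_adj (n : nat) (u v : gvert n) : bool :=
  ((u.1 == v.1) && path_adj u.2 v.2) || ((u.2 == v.2) && path_adj u.1 v.1).

Definition distr (n : nat) := gvert n -> nat.
Definition dsize (n : nat) (D : distr n) : nat := \sum_(v : gvert n) D v.

Definition move_result (n : nat) (D : distr n) (v u : gvert n) : distr n :=
  fun w => if w == v then D w - 2 else if w == u then (D w).+1 else D w.

Inductive moves_to (n : nat) : distr n -> distr n -> Prop :=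
| moves_refl D : moves_to D D
| moves_step D D' v u :
    grid_adj v u -> 2 <= D v -> moves_to (move_result D v u) D' -> moves_to D D'.

(* v is reachable under D: D v >= 1, or there is a sequence of pebbling moves
   whose last move (along an edge w v, legal in the configuration D1 reached
   before it) places a pebble on v. *)
Definition reachable (n : nat) (D : distr n) (v : gvert n) : Prop :=
  0 < D v \/
  exists (D1 : distr n) (w : gvert n), moves_to D D1 /\ grid_adj w v /\ 2 <= D1 w.

Definition solvable (n : nat) (D : distr n) : Prop :=
  forall v : gvert n, reachable D v.

Definition solvable_size (n : nat) : pred nat :=
  fun k => if excluded_middle_informative
                (exists D : distr n, solvable D /\ dsize D = k)
           then true else false.

Lemma solvable_size_ex (n : nat) : exists k, solvable_size n k.
Proof.
exists (dsize (fun _ : gvert n => 1)).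
rewrite /solvable_size; case: excluded_middle_informative => // H; exfalso.
apply: H; exists (fun _ => 1); split => // v; by left.
Qed.

Definition pi_opt (n : nat) : nat := ex_minn (solvable_size_ex n).

(* Main.v *)
Require Import Defs.
From mathcomp Require Import all_boot zify.
From Stdlib Require Import FunctionalExtensionality Classical ClassicalEpsilon.

Set Implicit Arguments.
Unset Strict Implicit.
Unset Printing Implicit Defensive.


Lemma pi_opt_le n (D : distr n) : solvable D -> pi_opt n <= dsize D.
Proof.
move=> HD; rewrite /pi_opt; case: ex_minnP => k _ Hk; apply: Hk.
rewrite /solvable_size; case: excluded_middle_informative => // H; exfalso.
by apply: H; exists D.
Qed.

Lemma pi_opt_sol n : exists D : distr n, solvable D /\ dsize D = pi_opt n.
Proof.
rewrite /pi_opt; case: ex_minnP => k Hk _; move: Hk.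
rewrite /solvable_size; case: excluded_middle_informative => //.
Qed.

Lemma moves_mono n (D D1 : distr n) : moves_to D D1 ->
  forall E, (forall w, D w <= E w) ->
  exists E1, moves_to E E1 /\ forall w, D1 w <= E1 w.
Proof.
elim=> {D D1} [D|D D' v u Hvu H2 _ IH] E HE.
  by exists E; split => //; apply: moves_refl.
have HM : forall w, move_result D v u w <= move_result E v u w.
  move=> w; rewrite /move_result; case: (w == v); first by have := HE w; lia.
  by case: (w == u) => //; have := HE w; lia.
have [E1 [HE1 HDE]] := IH (move_result E v u) HM.
exists E1; split => //; apply: moves_step HE1 => //.
by apply: leq_trans H2 (HE v).
Qed.

Lemma reach_mono n (D E : distr n) v : (forall w, D w <= E w) ->
  reachable D v -> reachable E v.
Proof.
move=> HE [H|[D1 [w [HD1 [Hadj H2]]]]].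
  by left; apply: leq_trans H (HE v).
have [E1 [HE1 HDE]] := moves_mono HD1 HE.
right; exists E1, w; split => //; split => //; exact: leq_trans H2 (HDE w).
Qed.

Lemma grid_adj_neq n (v u : gvert n) : grid_adj v u -> v != u.
Proof.
apply: contraTN => /eqP ->; rewrite /grid_adj /path_adj.
by rewrite !eqxx /=; lia.
Qed.

Section Emb.
Variables (n m i j : nat) (Hi : i + n <= m) (Hj : j + n <= m).

Lemma lt_i (x : 'I_n) : x + i < m.
Proof. by apply: leq_trans Hi; rewrite addnC ltn_add2l. Qed.
Lemma lt_j (x : 'I_n) : x + j < m.
Proof. by apply: leq_trans Hj; rewrite addnC ltn_add2l. Qed.

Definition phi (v : gvert n) : gvert m := (Ordinal (lt_i v.1), Ordinal (lt_j v.2)).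

Lemma phi_inj : injective phi.
Proof.
move=> [a b] [c d] [] /eqP; rewrite eqn_add2r => /eqP Hac /eqP; rewrite eqn_add2r => /eqP Hbd.
by congr pair; apply: val_inj.
Qed.

Lemma phi_adj v u : grid_adj v u -> grid_adj (phi v) (phi u).
Proof.
rewrite /grid_adj /path_adj /phi /=.
rewrite -!val_eqE /= !eqn_add2r -!addSn !eqn_add2r.
by case: v u => [a b] [c d] /=.

Qed.

Definition emb (D : distr n) : distr m := fun w => \sum_(v | phi v == w) D v.

Lemma emb_phi D v : emb D (phi v) = D v.
Proof. by rewrite /emb (big_pred1 v) // => x; rewrite /= (inj_eq phi_inj). Qed.

Lemma emb_move D v u : v != u -> forall w,
  emb (move_result D v u) w = move_result (emb D) (phi v) (phi u) w.
Proof.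
move=> Hvu w; case: (pickP (fun x => phi x == w)) => [x /eqP <-| H0].
  by rewrite !emb_phi /move_result !(inj_eq phi_inj) !emb_phi.
have Hw x : phi x != w by rewrite H0.
rewrite /move_result eq_sym (negbTE (Hw v)) eq_sym (negbTE (Hw u)).
by rewrite /emb !big_pred0.
Qed.

Lemma moves_emb D D1 : moves_to D D1 -> moves_to (emb D) (emb D1).
Proof.
elim=> {D D1} [D|D D' v u Hvu H2 _ IH]; first exact: moves_refl.
apply: (moves_step (v := phi v) (u := phi u)); first exact: phi_adj.
  by rewrite emb_phi.
have -> : move_result (emb D) (phi v) (phi u) = emb (move_result D v u).
  by apply: functional_extensionality => w; rewrite emb_move // grid_adj_neq.
exact: IH.
Qed.

Lemma reach_emb D t : reachable D t -> reachable (emb D) (phi t).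
Proof.
move=> [H|[D1 [w [HD1 [Hadj H2]]]]]; first by left; rewrite emb_phi.
right; exists (emb D1), (phi w); split; first exact: moves_emb.
by split; [exact: phi_adj | rewrite emb_phi].
Qed.

Lemma dsize_emb D : dsize (emb D) = dsize D.
Proof.
rewrite /dsize /emb.
under eq_bigr do rewrite big_mkcond.
rewrite exchange_big /=; apply: eq_bigr => v _.
rewrite -big_mkcond /=.
under eq_bigl do rewrite eq_sym.
by rewrite big_pred1_eq.
Qed.

End Emb.


Lemma le_sum_term (I : finType) (F : I -> nat) x : F x <= \sum_y F y.
Proof. by rewrite (bigD1 x) //= leq_addr. Qed.

Lemma tile n m : 0 < n -> n <= m -> pi_opt m <= (m %/ n).+1 * (m %/ n).+1 * pi_opt n.
Proof.
move=> Hn Hnm.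
set k := (m %/ n).+1.
have Hoff (a : nat) : minn (a * n) (m - n) + n <= m.
  have := geq_minr (a * n) (m - n); lia.
have [D [HD HDs]] := pi_opt_sol n.
pose E : distr m := fun w => \sum_(a < k) \sum_(b < k)
   emb (Hoff a) (Hoff b) D w.
have HE : solvable E.
  move=> w.
  have cover (x : 'I_m) : exists a : 'I_k, minn (a * n) (m - n) <= x < minn (a * n) (m - n) + n.
    have Ha : x %/ n < k by rewrite /k ltnS leq_div2r // ltnW.
    exists (Ordinal Ha) => /=.
    have H1 := leq_divM x n.
    have H2 : x < (x %/ n) * n + n.
      by rewrite -mulSnr ltn_ceil.
    have := ltn_ord x; lia.
  have [a /andP [Ha1 Ha2]] := cover w.1.
  have [b /andP [Hb1 Hb2]] := cover w.2.
  have Hx : w.1 - minn (a * n) (m - n) < n by lia.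
  have Hy : w.2 - minn (b * n) (m - n) < n by lia.
  pose v : gvert n := (Ordinal Hx, Ordinal Hy).
  have Hw : phi (Hoff a) (Hoff b) v = w.
    case: w Ha1 Ha2 Hb1 Hb2 Hx Hy @v => w1 w2 /= *.
    by congr pair; apply: val_inj => /=; rewrite subnK.
  apply: (@reach_mono _ (emb (Hoff a) (Hoff b) D)).
    move=> w'; rewrite /E.
    apply: leq_trans (le_sum_term (fun a : 'I_k => \sum_(b < k) emb (Hoff a) (Hoff b) D w') a).
    exact: (le_sum_term (fun b : 'I_k => emb (Hoff a) (Hoff b) D w') b).
  rewrite -Hw; exact: reach_emb.
apply: leq_trans (pi_opt_le HE) _.
rewrite /dsize /E exchange_big /=.
under eq_bigr do rewrite exchange_big /=.
under eq_bigr do under eq_bigr do rewrite -/(dsize _) dsize_emb HDs.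
rewrite !big_const_ord !iter_addn_0; lia.
Qed.


Definition dist (a b : nat) := (a - b) + (b - a).

Lemma exp2_step e f : e = f.+1 -> 2 ^ e = 2 * 2 ^ f.
Proof. by move=> ->; rewrite expnS. Qed.

Section Geo.
Variables (n a : nat) (Ha : a < n).
Let S m := \sum_(0 <= x < m) 2 ^ (n - dist a x).

Lemma geoA m : m <= a -> S m <= 2 ^ (n - (a - m)).
Proof.
elim: m => [|m IH] Hm; first by rewrite /S big_geq.
rewrite /S big_nat_recr //= -/(S m).
have := IH (ltnW Hm).
have E1 : 2 ^ (n - (a - m.+1)) = 2 * 2 ^ (n - (a - m)) by apply: exp2_step; lia.
have E2 : dist a m = a - m by rewrite /dist; lia.
rewrite E1 E2; lia.
Qed.

Lemma geoB m : a < m -> m <= n -> S m + 2 ^ (n - (m - 1 - a)) <= 3 * 2 ^ n.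
Proof.
elim: m => [|m IH] //= Hm Hmn.
rewrite /S big_nat_recr //= -/(S m).
case: (eqVneq m a) => [->|Hma].
  have := geoA (leqnn a).
  have E2 : dist a a = 0 by rewrite /dist; lia.
  rewrite E2 !subnn subn0.
  have -> : a.+1 - 1 - a = 0 by lia.
  rewrite subn0; lia.
have Ham : a < m by lia.
have := IH Ham (ltnW Hmn).
have E1 : 2 ^ (n - (m - 1 - a)) = 2 * 2 ^ (n - (m.+1 - 1 - a)) by apply: exp2_step; lia.
have E2 : dist a m = m.+1 - 1 - a by rewrite /dist; lia.
rewrite E1 E2; lia.
Qed.

Lemma geo : \sum_(x < n) 2 ^ (n - dist a x) <= 3 * 2 ^ n.
Proof.
rewrite -(big_mkord xpredT (fun x => 2 ^ (n - dist a x))).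
have := geoB Ha (leqnn n); rewrite -/(S n); lia.
Qed.
End Geo.

Section Pot.
Variable n : nat.
Definition wt (t u : gvert n) := 2 ^ (n - dist t.1 u.1) * 2 ^ (n - dist t.2 u.2).
Definition Phi (t : gvert n) (D : distr n) := \sum_u D u * wt t u.

Lemma wt_adj t v u : grid_adj v u -> wt t u <= 2 * wt t v.
Proof.
rewrite /grid_adj /path_adj /wt => /orP [/andP [/eqP E /orP H]|/andP [/eqP E /orP H]].
  rewrite E mulnCA leq_pmul2l ?expn_gt0 //.
  rewrite -expnS leq_pexp2l //; rewrite /dist; case: H => /eqP H; lia.
rewrite E mulnA [2 * _]mulnC leq_pmul2r ?expn_gt0 //.
rewrite mulnC -expnS leq_pexp2l //; rewrite /dist; case: H => /eqP H; lia.
Qed.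

Lemma sum_ind (F : gvert n -> nat) v :
  \sum_x (if x == v then F x else 0) = F v.
Proof. by rewrite -big_mkcond big_pred1_eq. Qed.

Lemma Phi_move t D v u : 2 <= D v -> grid_adj v u ->
  Phi t (move_result D v u) <= Phi t D.
Proof.
move=> H2 Hadj; have Hvu := grid_adj_neq Hadj.
have Eq : Phi t (move_result D v u) + 2 * wt t v = Phi t D + wt t u.
  rewrite -[2 * wt t v](sum_ind (fun x => 2 * wt t x)).
  rewrite -[wt t u](sum_ind (fun x => wt t x)).
  rewrite /Phi -!big_split /=; apply: eq_bigr => x _.
  rewrite /move_result; case: (eqVneq x v) => [->|Hxv].
    rewrite (negbTE Hvu); nia.
  case: (eqVneq x u) => [->|Hxu] /=; nia.
have := wt_adj t Hadj; lia.
Qed.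

Lemma Phi_moves t D D1 : moves_to D D1 -> Phi t D1 <= Phi t D.
Proof.
elim=> {D D1} [D|D D' v u Hvu H2 _ IH]; first exact: leqnn.
exact: leq_trans IH (Phi_move t H2 Hvu).
Qed.

Lemma wt_self t : wt t t = 2 ^ n * 2 ^ n.
Proof. rewrite /wt /dist; have E x : x - x + (x - x) = 0 by lia. by rewrite !E !subn0. Qed.

Lemma Phi_reach D t : reachable D t -> 2 ^ n * 2 ^ n <= Phi t D.
Proof.
move=> [H|[D1 [w [HD1 [Hadj H2]]]]].
  apply: leq_trans (le_sum_term (fun u => D u * wt t u) t).
  by rewrite wt_self leq_pmull.
apply: leq_trans (Phi_moves t HD1).
apply: leq_trans (le_sum_term (fun u => D1 u * wt t u) w).
rewrite -(wt_self t); apply: leq_trans (wt_adj t Hadj) _.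
by rewrite leq_mul2r H2 orbT.
Qed.
End Pot.

Lemma dist_sym a b : dist a b = dist b a.
Proof. by rewrite /dist addnC. Qed.

Lemma sumwt n (u : gvert n) : \sum_(t : gvert n) wt t u <= 9 * (2 ^ n * 2 ^ n).
Proof.
rewrite /wt.
change (\sum_(t : 'I_n * 'I_n) 2 ^ (n - dist t.1 u.1) * 2 ^ (n - dist t.2 u.2)
   <= 9 * (2 ^ n * 2 ^ n)).
rewrite -(pair_bigA _ (fun (i j : 'I_n) => 2 ^ (n - dist i u.1) * 2 ^ (n - dist j u.2))) /=.
rewrite -big_distrlr /=.
have -> : 9 * (2 ^ n * 2 ^ n) = (3 * 2 ^ n) * (3 * 2 ^ n) by lia.
apply: leq_mul.
  under eq_bigr do rewrite dist_sym.
  exact: geo (ltn_ord u.1).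
under eq_bigr do rewrite dist_sym.
exact: geo (ltn_ord u.2).
Qed.

Lemma lower n : n * n <= 9 * pi_opt n.
Proof.
have [D [HD HDs]] := pi_opt_sol n.
have Hp : 0 < 2 ^ n * 2 ^ n by rewrite muln_gt0 expn_gt0.
rewrite -(leq_pmul2r Hp).
have H1 : n * n * (2 ^ n * 2 ^ n) = \sum_(t : gvert n) (2 ^ n * 2 ^ n).
  by rewrite sum_nat_const card_prod card_ord.
have H2 : \sum_(t : gvert n) (2 ^ n * 2 ^ n) <= \sum_(t : gvert n) Phi t D.
  by apply: leq_sum => t _; apply: Phi_reach.
have H3 : \sum_(t : gvert n) Phi t D = \sum_(u : gvert n) D u * \sum_(t : gvert n) wt t u.
  rewrite /Phi exchange_big /=; apply: eq_bigr => u _.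
  by rewrite big_distrr.
have H4 : \sum_(u : gvert n) D u * \sum_(t : gvert n) wt t u <=
          \sum_(u : gvert n) D u * (9 * (2 ^ n * 2 ^ n)).
  by apply: leq_sum => u _; rewrite leq_mul2l sumwt orbT.
rewrite -big_distrl /= -/(dsize D) HDs in H4.
rewrite H1; apply: leq_trans H2 _; rewrite H3; apply: leq_trans H4 _.
by rewrite mulnA [pi_opt n * 9]mulnC.
Qed.

Lemma key n m : 0 < n -> n <= m ->
  n * n * m * pi_opt m <= m * m * m * pi_opt n + 27 * n * pi_opt n * pi_opt m.
Proof.
move=> Hn Hnm.
have Ht := tile Hn Hnm.
set k := (m %/ n).+1 in Ht.
have Hk : k * n <= m + n by rewrite /k mulSn addnC leq_add2r leq_divM.
have Hl := lower m.
set P := pi_opt n in Ht *. set Q := pi_opt m in Ht Hl *.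
have S1 : n * n * m * Q <= m * ((k * n) * (k * n)) * P.
  have : n * n * m * Q <= n * n * m * (k * k * P) by rewrite leq_mul2l Ht orbT.
  move=> H; apply: leq_trans H _; rewrite leq_eqVlt; apply/orP; left; apply/eqP; nia.
have S2 : (k * n) * (k * n) <= (m + n) * (m + n) by apply: leq_mul.
have S3 : m * ((k * n) * (k * n)) * P <= m * ((m + n) * (m + n)) * P.
  by rewrite leq_mul2r leq_mul2l S2 !orbT.
have S4 : m * ((m + n) * (m + n)) * P <= m * m * m * P + 3 * (m * m) * n * P.
  have : n * n <= m * n by rewrite leq_mul2r Hnm orbT.
  nia.
have S5 : 3 * (m * m) * n * P <= 27 * n * P * Q by nia.
lia.
Qed.
From Stdlib Require Import Reals Lra.
Open Scope R_scope.

Lemma INR9 : INR 9 = 9. Proof. simpl; lra. Qed.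
Lemma INR27 : INR 27 = 27. Proof. simpl; lra. Qed.

Definition bb (n : nat) : R := INR (n * n)%nat / INR (pi_opt n).

Lemma INR_le' (a b : nat) : (a <= b)%nat -> INR a <= INR b.
Proof. by move/leP; apply: le_INR. Qed.

Lemma pi_pos n : (0 < n)%nat -> 0 < INR (pi_opt n).
Proof.
move=> Hn; apply: lt_0_INR; apply/ltP.
have := lower n; nia.
Qed.

Lemma bb_le9 n : (0 < n)%nat -> bb n <= 9.
Proof.
move=> Hn; have Hp := pi_pos Hn; rewrite /bb.
have H := INR_le' (lower n); rewrite -!multE !mult_INR INR9 in H *.
apply: (Rmult_le_reg_r (INR (pi_opt n))) => //.
unfold Rdiv; rewrite Rmult_assoc Rinv_l; lra.
Qed.

Lemma bb_key n m : (0 < n)%nat -> (n <= m)%nat ->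
  bb n - 27 * INR n / INR m <= bb m.
Proof.
move=> Hn Hnm.
have Hm : (0 < m)%nat by apply: leq_trans Hnm.
have HP := pi_pos Hn; have HQ := pi_pos Hm.
have Hm' : 0 < INR m by apply: lt_0_INR; apply/ltP.
have H := INR_le' (@key n m Hn Hnm).
rewrite -!multE -plusE !plus_INR !mult_INR in H.
rewrite /bb -!multE !mult_INR.
set P := INR (pi_opt n) in HP H *; set Q := INR (pi_opt m) in HQ H *.
set x := INR n in H *; set y := INR m in Hm' H *.
apply: (Rmult_le_reg_r (P * Q * y)); first by apply: Rmult_lt_0_compat => //; apply: Rmult_lt_0_compat.
replace ((x * x / P - 27 * x / y) * (P * Q * y)) with (x * x * y * Q - 27 * x * P * Q) by (field; lra).
replace (y * y / Q * (P * Q * y)) with (y * y * y * P) by (field; lra).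
change (INR 27) with (INR 27) in H.
have E27 : INR 27 = 27 by rewrite /= ; lra.
rewrite E27 in H; lra.
Qed.

Theorem mainTheorem1 :
  exists l : R, Un_cv (fun n : nat => INR (n * n)%nat / INR (pi_opt n)) l.
Proof.
pose E := fun x => exists n, (0 < n)%nat /\ x = bb n.
have Hb : bound E by exists 9 => x [n [Hn ->]]; apply: bb_le9.
have Hne : exists x, E x by exists (bb 1); exists 1%nat.
have [S [HSu HSl]] := completeness E Hb Hne.
exists S => eps Heps.
have [n [Hn Hbn]] : exists n, (0 < n)%nat /\ S - eps / 2 < bb n.
  apply: NNPP => Hno; have : S <= S - eps / 2; last lra.
  apply: HSl => x [n [Hn ->]]; apply: Rnot_lt_le => Hlt; apply: Hno; exists n; split => //.
have [N HN] := INR_unbounded (54 * INR n / eps).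
exists (N + n)%nat => m Hm.
have Hnm : (n <= m)%nat by apply/leP; lia.
have Hm0 : (0 < m)%nat by apply: leq_trans Hnm.
have Hy : 0 < INR m by apply: lt_0_INR; apply/ltP.
have HmN : INR N <= INR m by apply: le_INR; lia.
have Hk := bb_key Hn Hnm.
have Hup : bb m <= S by apply: HSu; exists m.
have Hsmall : 27 * INR n / INR m <= eps / 2.
  have Hnpos : 0 <= INR n by apply: pos_INR.
  apply: (Rmult_le_reg_r (INR m)) => //.
  replace (27 * INR n / INR m * INR m) with (27 * INR n) by (field; lra).
  have : 54 * INR n < eps * INR m.
    have : 54 * INR n / eps < INR m by lra.
    move=> H; apply: (Rmult_lt_reg_r (/ eps)); first by apply: Rinv_0_lt_compat.
    replace (eps * INR m * / eps) with (INR m) by (field; lra).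
    exact: H.
  lra.
rewrite /R_dist; apply: Rabs_def1; rewrite /bb in Hk Hup Hbn *; lra.
Qed.
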